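(* Let $L$ be a bounded lattice, $k\in\mathbb{N}^*$, and $\otimes$ a t-norm on $L$ that is both $\wedge$-distributive and $\vee$-distributive and such that $\langle L,\otimes\rangle$ is divisible. A function $F:L^2\to L$ is $\otimes^k$-homogeneous, has $1_L$ as neutral element, and satisfies $F(x,y)=F(x\wedge y,x\vee y)$ for all $x,y\in L$ if and only if $$F(x,y)=(x\wedge y)\otimes(x\vee y)_\otimes^{(k-1)}\quad\text{for all }x,y\in L.$$
   Context: A t-norm on $L$ is a commutative, associative map $L^2\to L$, non-decreasing in each argument, with neutral element $1_L$. It is $\wedge$-distributive if $x\otimes(y\wedge z)=(x\otimes y)\wedge(x\otimes z)$ and $\vee$-distributive if $x\otimes(y\vee z)=(x\otimes y)\vee(x\otimes z)$, for all $x,y,z$. $\langle L,\otimes\rangle$ is divisible if for all $x,y$ with $y\le_Lx$ there is $z$ with $y=x\otimes z$. Powers: $\lambda_\otimes^{(0)}=1_L$, $\lambda_\otimes^{(1)}=\lambda$, $\lambda_\otimes^{(m)}=\lambda\otimes\lambda_\otimes^{(m-1)}$ for $m\ge2$. $F:L^2\to L$ is $\otimes^k$-homogeneous if $F(\lambda\otimes x,\lambda\otimes y)=\lambda_\otimes^{(k)}\otimes F(x,y)$ for all $\lambda,x,y\in L$. $1_L$ is a neutral element of $F$ if $F(x,1_L)=F(1_L,x)=x$ for all $x$. *)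

(* Defs.v *)
From HB Require Import structures.
From mathcomp Require Import all_boot all_order.
Set Implicit Arguments. Unset Strict Implicit. Unset Printing Implicit Defensive.
Import Order.Theory.
Local Open Scope order_scope.

Section TNorm.
Context {disp : Order.disp_t} {L : tbLatticeType disp}.

Definition is_tnorm (T : L -> L -> L) : Prop :=
  (forall x y, T x y = T y x) /\
  (forall x y z, T x (T y z) = T (T x y) z) /\
  (forall x y z, y <= z -> T x y <= T x z) /\
  (forall x y z, x <= y -> T x z <= T y z) /\
  (forall x, T x \top = x).

Definition meet_distributive (T : L -> L -> L) : Prop :=
  forall x y z, T x (y `&` z) = (T x y) `&` (T x z).

Definition join_distributive (T : L -> L -> L) : Prop :=
  forall x y z, T x (y `|` z) = (T x y) `|` (T x z).

Definition divisible (T : L -> L -> L) : Prop :=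
  forall x y, y <= x -> exists z, y = T x z.

Fixpoint tpow (T : L -> L -> L) (lam : L) (m : nat) : L :=
  match m with
  | 0 => \top
  | 1 => lam
  | m'.+1 => T lam (tpow T lam m')
  end.

Definition homogeneous (T : L -> L -> L) (k : nat) (F : L -> L -> L) : Prop :=
  forall lam x y, F (T lam x) (T lam y) = T (tpow T lam k) (F x y).

Definition has_neutral_top (F : L -> L -> L) : Prop :=
  forall x, F x \top = x /\ F \top x = x.

End TNorm.

(* Main.v *)
Require Import Defs.
From HB Require Import structures.
From mathcomp Require Import all_boot all_order.
Import Order.Theory.
Local Open Scope order_scope.

Section Aux.
Context {disp : Order.disp_t} {L : tbLatticeType disp} (T : L -> L -> L).
Hypothesis Tc : forall x y, T x y = T y x.
Hypothesis Ta : forall x y z, T x (T y z) = T (T x y) z.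
Hypothesis Tu : forall x, T x \top = x.

Lemma tpowS lam m : tpow T lam m.+1 = T lam (tpow T lam m).
Proof. by case: m => [|m] //=; rewrite Tu. Qed.

Lemma Tswap a b c d : T (T a b) (T c d) = T (T a c) (T b d).
Proof.
rewrite -Ta (Ta b c d) (Tc b c) -(Ta c b d) Ta //.
Qed.

Lemma tpow_mul a b m : tpow T (T a b) m = T (tpow T a m) (tpow T b m).
Proof.
elim: m => [|m IH]; first by rewrite /= Tu.
by rewrite !tpowS IH Tswap.
Qed.

Lemma tpow_top m : tpow T \top m = \top.
Proof. elim: m => [|m IH] //; by rewrite tpowS IH Tu. Qed.
End Aux.

Theorem mainTheorem12 (disp : Order.disp_t) (L : tbLatticeType disp)
  (k : nat) (T : L -> L -> L) (F : L -> L -> L) :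
  (0 < k)%N ->
  is_tnorm T -> meet_distributive T -> join_distributive T -> divisible T ->
  (homogeneous T k F /\ has_neutral_top F /\
     (forall x y, F x y = F (x `&` y) (x `|` y)))
  <-> (forall x y, F x y = T (x `&` y) (tpow T (x `|` y) (k - 1))).
Proof.
move=> k0 [Tc [Ta [_ [_ Tu]]]] Md Jd Dv.
have Ek : k = (k - 1).+1 by rewrite subn1 prednK.
split.
- move=> [Hh [Hn Hs]] x y.
  rewrite Hs.
  set a := x `&` y; set b := x `|` y.
  have ab : a <= b by apply: le_trans (leIl x y) (leUl x y).
  have [z ->] := Dv b a ab.
  have -> : F (T b z) b = F (T b z) (T b \top) by rewrite Tu.
  rewrite Hh (proj1 (Hn z)) {1}Ek (@tpowS _ _ T Tu).
  by rewrite -!Ta (Tc (tpow T b (k - 1)) z).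
- move=> HF; split; [|split].
  + move=> lam x y; rewrite !HF -Md -Jd (@tpow_mul _ _ T Tc Ta Tu).
    rewrite [in tpow T lam k]Ek (@tpowS _ _ T Tu).
    by rewrite (@Tswap _ _ T Tc Ta).
  + move=> x; rewrite !HF; split.
    * by rewrite meetx1 joinx1 (@tpow_top _ _ T Tu) Tu.
    * by rewrite meet1x join1x (@tpow_top _ _ T Tu) Tu.
  + move=> x y; rewrite !HF.
    have h1 : (x `&` y) `&` (x `|` y) = x `&` y.
      by apply/eqP; rewrite eq_meetl; apply: le_trans (leIl x y) (leUl x y).
    have h2 : (x `&` y) `|` (x `|` y) = x `|` y.
      by apply/eqP; rewrite eq_joinr; apply: le_trans (leIl x y) (leUl x y).
    by rewrite h1 h2.
Qed.
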